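(* Let $G$ be a finite, connected, simple graph with shortest-path metric $d$. Then $G$ is meshed if and only if for every metric triangle $vxy$ of $G$ with $d(x,y)=2$, we have $d(v,x)=d(v,y)=2$ and there exists a vertex $z$ adjacent to both $x$ and $y$ such that $d(v,z)=2$.
   Context: All graphs are finite, connected, undirected, without loops or multiple edges; $d$ denotes the shortest-path distance. The interval between vertices $u,w$ is $I(u,w)=\{x: d(u,x)+d(x,w)=d(u,w)\}$. Three vertices $x,y,z$ form a metric triangle $xyz$ if $I(x,y)\cap I(x,z)=\{x\}$, $I(x,y)\cap I(y,z)=\{y\}$ and $I(x,z)\cap I(y,z)=\{z\}$. A graph $G$ is meshed if for any three vertices $v,x,y$ with $d(x,y)=2$ there exists a common neighbor $z$ of $x$ and $y$ such that $2d(v,z)\le d(v,x)+d(v,y)$. *)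

(* Defs.v *)
(* A finite simple graph is a finType T with a symmetric,
   irreflexive adjacency relation e : rel T. *)
From mathcomp Require Import all_boot.
Set Implicit Arguments. Unset Strict Implicit. Unset Printing Implicit Defensive.

Section Graph.
Variables (T : finType) (e : rel T).

Definition walkn (n : nat) (x y : T) : bool :=
  [exists p : n.-tuple T, path e x p && (last x p == y)].

(* In a connected graph on #|T| vertices such an n
   always exists, so this is the usual graph distance. *)
Definition gdist (x y : T) : nat :=
  find (fun n => walkn n x y) (iota 0 #|T|).

Definition gconnected : Prop := forall x y : T, connect e x y.

Definition interval (u w : T) : {set T} :=
  [set x | gdist u x + gdist x w == gdist u w].

Definition metric_triangle (x y z : T) : Prop :=
  [/\ interval x y :&: interval x z = [set x],
      interval x y :&: interval y z = [set y] &
      interval x z :&: interval y z = [set z]].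

Definition meshed : Prop :=
  forall v x y : T, gdist x y = 2 ->
    exists z : T, [/\ e x z, e z y & 2 * gdist v z <= gdist v x + gdist v y].

End Graph.

(* Main.v *)
Require Import Defs.
From mathcomp Require Import all_boot zify.
Set Implicit Arguments. Unset Strict Implicit. Unset Printing Implicit Defensive.

Section G.
Variables (T : finType) (e : rel T).
Hypotheses (e_sym : symmetric e) (e_irr : irreflexive e) (e_conn : gconnected e).

Lemma walk0 x y : walkn e 0 x y = (x == y).
Proof.
apply/existsP/idP => [[p /andP[_ /eqP <-]]|/eqP <-].
  by rewrite (tuple0 p).
by exists [tuple]; rewrite /= eqxx.
Qed.

Lemma walkS n x y : walkn e n.+1 x y = [exists u, e x u && walkn e n u y].
Proof.
apply/existsP/existsP => [[p]|[u /andP[exu /existsP[p Hp]]]].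
  case: p => [[|u p'] //= Hs] /andP[/andP[exu Hp] Hl].
  exists u; rewrite exu /=; apply/existsP.
  have Hs' : size p' == n by [].
  by exists (Tuple Hs'); rewrite /= Hp Hl.
by exists [tuple of u :: p]; rewrite /= exu.
Qed.

Lemma walk_cat m n x y z : walkn e m x y -> walkn e n y z -> walkn e (m + n) x z.
Proof.
elim: m x => [|m IH] x; first by rewrite walk0 => /eqP ->.
rewrite walkS => /existsP[u /andP[exu Hu]] Hn.
by rewrite addSn walkS; apply/existsP; exists u; rewrite exu (IH _ Hu Hn).
Qed.

Lemma walk1 x y : walkn e 1 x y = e x y.
Proof.
rewrite walkS; apply/existsP/idP => [[u /andP[exu]]|exy].
  by rewrite walk0 => /eqP <-.
by exists y; rewrite exy walk0 eqxx.
Qed.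

Lemma walk_sym n x y : walkn e n x y -> walkn e n y x.
Proof.
elim: n x y => [|n IH] x y; first by rewrite !walk0 eq_sym.
rewrite walkS => /existsP[u /andP[exu Hu]].
rewrite -addn1; apply: (walk_cat (IH _ _ Hu)).
by rewrite walk1 e_sym.
Qed.

Lemma walk_exists x y : exists n, (n < #|T|) && walkn e n x y.
Proof.
have /connectP[p Hp Hl] := e_conn x y.
move: Hl; case: (shortenP Hp) => p' Hp' Hu _ Hl.
have Hs : size (x :: p') <= #|T|.
  by move/card_uniqP: Hu => <-; apply: max_card.
exists (size p'); apply/andP; split; first exact: Hs.
apply/existsP.
by exists (in_tuple p'); rewrite /= Hp' -Hl eqxx.
Qed.

Lemma gdist_lt x y : gdist e x y < #|T|.
Proof.
have [n /andP[Hn Hw]] := walk_exists x y.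
have Hh : has (fun n => walkn e n x y) (iota 0 #|T|).
  by apply/hasP; exists n; rewrite ?mem_iota //.
by move: Hh; rewrite has_find size_iota.
Qed.

Lemma gdist_walk x y : walkn e (gdist e x y) x y.
Proof.
have [n /andP[Hn Hw]] := walk_exists x y.
have Hh : has (fun n => walkn e n x y) (iota 0 #|T|).
  by apply/hasP; exists n; rewrite ?mem_iota //.
have := nth_find 0 Hh; rewrite nth_iota //.
by have := gdist_lt x y.
Qed.

Lemma gdist_min m x y : walkn e m x y -> gdist e x y <= m.
Proof.
move=> Hw; case: (ltnP m #|T|) => Hm; last first.
  by apply: leq_trans (ltnW (gdist_lt x y)) Hm.
rewrite leqNgt; apply/negP => Hlt.
have := before_find 0 Hlt; rewrite nth_iota // => Hf.
by rewrite Hf in Hw.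
Qed.

Notation d := (gdist e).

Lemma d_refl x : d x x = 0.
Proof. by apply/eqP; rewrite -leqn0; apply: gdist_min; rewrite walk0. Qed.

Lemma d_eq0 x y : d x y = 0 -> x = y.
Proof. by move=> H; have := gdist_walk x y; rewrite H walk0 => /eqP. Qed.

Lemma d_sym x y : d x y = d y x.
Proof.
by apply/eqP; rewrite eqn_leq !gdist_min // walk_sym // gdist_walk.
Qed.

Lemma d_tri x y z : d x z <= d x y + d y z.
Proof. by apply: gdist_min; apply: walk_cat; apply: gdist_walk. Qed.

Lemma d_edge x y : e x y -> d x y = 1.
Proof.
move=> H; apply/eqP; rewrite eqn_leq gdist_min ?walk1 //= lt0n.
apply/negP => /eqP /d_eq0 E; by rewrite E e_irr in H.
Qed.

Lemma d_one x y : d x y = 1 -> e x y.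
Proof. by move=> H; have := gdist_walk x y; rewrite H walk1. Qed.

Lemma d_step n x y : d x y = n.+1 -> exists u, e x u /\ d u y = n.
Proof.
move=> H; have := gdist_walk x y; rewrite H walkS => /existsP[u /andP[exu Hu]].
exists u; split => //; apply/eqP; rewrite eqn_leq gdist_min //=.
have := d_tri x u y; rewrite H (d_edge exu); lia.
Qed.

Lemma d_adj x y z : e x y -> d x z <= (d y z).+1.
Proof. by move=> H; have := d_tri x y z; rewrite (d_edge H). Qed.

Lemma in_interval u w x : (x \in interval e u w) = (d u x + d x w == d u w).
Proof. by rewrite inE. Qed.

Lemma interval_sym u w : interval e u w = interval e w u.
Proof. by apply/setP => x; rewrite !in_interval addnC (d_sym u x) (d_sym x w) (d_sym u w). Qed.


Lemma lemL (Hm : meshed e) x n : forall v y, d v y = n.+1 -> d x y < d x v ->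
  exists p, [/\ e v p, d p y = n & d x p < d x v].
Proof.
elim: n => [|n IH] v y Hvy Hf.
  by exists y; split => //; [apply: d_one | rewrite d_refl].
have A : forall p, e v p -> d p y = n.+1 -> d x p <= d x v ->
    exists p, [/\ e v p, d p y = n.+1 & d x p < d x v].
  move=> p evp Hpy Hp.
  case: (ltnP (d x p) (d x v)) => Hlt; first by exists p.
  have [|p' [epp' Hp'y Hp']] := IH p y Hpy; first by lia.
  have Hvp' : d v p' = 2.
    have := d_tri v p p'; have := d_tri v p' y; rewrite (d_edge evp) (d_edge epp'); lia.
  have [z [evz ezp' Hz]] := Hm x v p' Hvp'.
  exists z; split => //; last by lia.
  have := d_tri z p' y; have := d_tri v z y; rewrite (d_edge evz) (d_edge ezp'); lia.
have [p [evp Hpy]] := d_step Hvy.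
have := d_tri x v p; rewrite (d_edge evp) => Hp.
case: (leqP (d x p) (d x v)) => Hle; first exact: (A p).
have [|p' [epp' Hp'y Hp']] := IH p y Hpy; first by lia.
have Hvp' : d v p' = 2.
  have := d_tri v p p'; have := d_tri v p' y; rewrite (d_edge evp) (d_edge epp'); lia.
have [z [evz ezp' Hz]] := Hm x v p' Hvp'.
apply: (A z evz); last by lia.
have := d_tri z p' y; have := d_tri v z y; rewrite (d_edge evz) (d_edge ezp'); lia.
Qed.


Lemma in_tri (A B : {set T}) a p : A :&: B = [set a] -> p \in A -> p \in B -> p = a.
Proof.
move=> H pA pB; have : p \in A :&: B by rewrite in_setI pA pB.
by rewrite H inE => /eqP.
Qed.

Lemma main_fw (Hm : meshed e) v x y : metric_triangle e v x y -> d x y = 2 ->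
  [/\ d v x = 2, d v y = 2 & exists z, [/\ e x z, e z y & d v z = 2]].
Proof.
move=> [H1 H2 H3] Hxy.
have [z [exz ezy Hz]] := Hm v x y Hxy.
have zxy : z \in interval e x y.
  by rewrite in_interval (d_edge exz) (d_edge ezy) Hxy.
have Nx : d v z + d z x != d v x.
  apply/negP => Hi; have zvx : z \in interval e v x by rewrite in_interval.
  have E := in_tri H2 zvx zxy.
  by rewrite E e_irr in exz.
have Ny : d v z + d z y != d v y.
  apply/negP => Hi; have zvy : z \in interval e v y by rewrite in_interval.
  have E := in_tri H3 zvy zxy.
  by rewrite E e_irr in ezy.
move: Nx Ny; rewrite (d_sym z x) (d_edge exz) (d_edge ezy) => Nx Ny.
have t1 := d_tri v z x; have t2 := d_tri v z y.
rewrite (d_sym z x) (d_edge exz) (d_edge ezy) in t1 t2.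
have Ek1 : d v x = d v z by lia.
have Ek2 : d v y = d v z by lia.
have Hx0 : d v x != 0.
  apply/negP => /eqP H; have := d_tri x v y; rewrite (d_sym x v); lia.
have Hx1 : d v x != 1.
  apply/negP => /eqP H.
  have vvx : v \in interval e v x by rewrite in_interval d_refl.
  have vxy : v \in interval e x y by rewrite in_interval Hxy (d_sym x v) H Ek2 -Ek1 H.
  have E := in_tri H2 vvx vxy.
  by move: H; rewrite E d_refl.
case: (ltnP (d v x) 3) => Hk.
  by split; [lia | lia | exists z; split => //; lia].
have Ha : d v y = (d v x).-1.+1 by rewrite Ek2 -Ek1; lia.
have Hb : d x y < d x v by rewrite Hxy d_sym; lia.
have [p [evp Hpy Hp]] := lemL Hm Ha Hb.
have t3 := d_tri x p v; rewrite (d_sym p v) (d_edge evp) (d_sym x v) in t3 Hp.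
have pvx : p \in interval e v x by rewrite in_interval (d_edge evp) (d_sym p x); lia.
have pvy : p \in interval e v y by rewrite in_interval (d_edge evp) Hpy Ek2 -Ek1; lia.
have E := in_tri H1 pvx pvy.
by rewrite E e_irr in evp.
Qed.


Lemma main_bw (Hc : forall v x y : T, metric_triangle e v x y -> gdist e x y = 2 ->
     [/\ gdist e v x = 2, gdist e v y = 2 &
         exists z : T, [/\ e x z, e z y & gdist e v z = 2]]) : meshed e.
Proof.
move=> v x y Hxy.
case: (boolP [exists z, [&& e x z, e z y & 2 * d v z <= d v x + d v y]]).
  by move=> /existsP[z /and3P[H1 H2 H3]]; exists z.
move=> /existsPn Hn.
have H : forall z, e x z -> e z y -> d v x + d v y < 2 * d v z.
  by move=> z exz ezy; have := Hn z; rewrite exz ezy /= ltnNge.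
have [u [exu Huy]] := d_step Hxy.
have euy := d_one Huy.
have tu1 := d_tri v x u; have tu2 := d_tri v y u.
rewrite (d_edge exu) (d_sym y u) Huy in tu1 tu2.
have Hu := H u exu euy.
have tx := d_tri v x y; have ty := d_tri v y x.
rewrite Hxy (d_sym y x) Hxy in tx ty.
pose S := [pred p | (p \in interval e v x) && (p \in interval e v y)].
have Sv : S v.
  rewrite /S /= !in_interval d_refl.
  by rewrite !add0n !eqxx.
case: (arg_maxnP (fun p => d v p) Sv) => v' Sv' Hmax.
move: Sv'; rewrite /S /= !in_interval => /andP[/eqP E1 /eqP E2].
have MT : metric_triangle e v' x y.
  split; apply/setP => p; rewrite !inE.
  - apply/andP/eqP => [[/eqP Hp1 /eqP Hp2]|->]; last by rewrite d_refl !eqxx.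
    have a1 := d_tri v v' p; have a2 := d_tri v p x; have a3 := d_tri v p y.
    have Sp : S p by rewrite /S /= !in_interval; apply/andP; split; apply/eqP; lia.
    have := Hmax p Sp => /= a4.
    have : d v' p = 0 by lia.
    by move/d_eq0.
  - apply/andP/eqP => [[/eqP Hp1 /eqP Hp2]|->]; last by rewrite !d_refl ?addn0 ?add0n !eqxx.
    case Ex: (d x p) => [|[|[|k]]]; first by move/d_eq0: Ex.
    + have exp := d_one Ex.
      have epy : e p y by apply: d_one; lia.
      have := H p exp epy.
      have := d_tri v v' p; rewrite (d_sym p x) Ex in Hp1; lia.
    + have : d p y = 0 by lia.
      move/d_eq0 => Ep; rewrite Ep (d_sym y x) Hxy in Hp1; lia.
    + lia.
  - apply/andP/eqP => [[/eqP Hp1 /eqP Hp2]|->]; last by rewrite !d_refl ?addn0 ?add0n !eqxx.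
    case Ey: (d p y) => [|[|[|k]]]; first by move/d_eq0: Ey.
    + have epy := d_one Ey.
      have exp : e x p by apply: d_one; lia.
      have := H p exp epy.
      have := d_tri v v' p; rewrite Ey in Hp1; lia.
    + have : d x p = 0 by lia.
      move/d_eq0 => Ep; rewrite -Ep in Hp1; lia.
    + lia.
have [Hx2 Hy2 [z [exz ezy Hz]]] := Hc v' x y MT Hxy.
exists z; split => //.
have := d_tri v v' z; lia.
Qed.

End G.

Theorem mainTheorem1 (T : finType) (e : rel T)
  (e_sym : symmetric e) (e_irr : irreflexive e) (e_conn : gconnected e) :
  meshed e <->
  (forall v x y : T, metric_triangle e v x y -> gdist e x y = 2 ->
     [/\ gdist e v x = 2, gdist e v y = 2 &
         exists z : T, [/\ e x z, e z y & gdist e v z = 2]]).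
Proof.
split.
- by move=> Hm v x y; apply: main_fw.
- by move=> Hc; apply: main_bw.
Qed.
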